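(* Let $Q$ be a set and let $\{*_\alpha\}_{\alpha\in\Lambda}$ be a family of quandle operations on $Q$ that are pairwise distributive with respect to each other, i.e. $(a*_\alpha b)*_\beta c=(a*_\beta c)*_\alpha(b*_\beta c)$ for all $\alpha,\beta\in\Lambda$ and $a,b,c\in Q$. Let $F$ be the free group on the symbols $*_\alpha$, and for $w\in F$ let $\star_w$ be the operation defined by $a\star_w b=(\cdots((a\,s_1\,b)\,s_2\,b)\cdots)\,s_k\,b$ for $w=s_1\cdots s_k$ (the letter $*_\alpha^{-1}$ acting as the right inverse operation of $*_\alpha$). Then the group $Q_F=\{(Q,\star_w)\mid w\in F\}$, with quandle multiplication $(Q,\star_w)(Q,\star_v)=(Q,\star_{wv})$, is commutative; that is, $\star_{wv}=\star_{vw}$ for all $w,v\in F$.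
   Context: A quandle operation on $Q$ is a binary operation $*$ with $x*x=x$, unique right division, and $(x*y)*z=(x*z)*(y*z)$. The right inverse $\bar*$ of $*$ is defined by $a=c*b\iff c=a\,\bar*\,b$. Quandle multiplication of two structures on the same set: $(Q,\circ)(Q,* )=(Q,\circ* )$ with $a\,(\circ* )\,b=(a\circ b)*b$; the unit of $Q_F$ is the trivial quandle ($a\star b=a$) and the inverse of $(Q,\star_w)$ is $(Q,\star_{w^{-1}})$. *)

(* Defs.v *)
From Stdlib Require Import List ClassicalEpsilon.

Definition is_quandle {Q : Type} (op : Q -> Q -> Q) : Prop :=
  (forall x, op x x = x) /\
  (forall a b, exists! c, op c b = a) /\
  (forall x y z, op (op x y) z = op (op x z) (op y z)).

Definition rdiv {Q : Type} (op : Q -> Q -> Q) (a b : Q) : Q :=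
  epsilon (inhabits a) (fun c => op c b = a).

(* Letters of the free group on the symbols *_alpha: (alpha, true) is *_alpha,
   (alpha, false) is *_alpha^{-1}, acting as the right inverse of *_alpha. *)
Definition letter_op {Q L : Type} (ops : L -> Q -> Q -> Q) (s : L * bool)
  : Q -> Q -> Q :=
  if snd s then ops (fst s) else rdiv (ops (fst s)).

Definition star_word {Q L : Type} (ops : L -> Q -> Q -> Q) (w : list (L * bool))
  (a b : Q) : Q :=
  fold_left (fun x s => letter_op ops s x b) w a.

(* Main.v *)
Require Import Defs.
From Stdlib Require Import List ClassicalEpsilon FunctionalExtensionality.

Lemma rdiv_uniq {Q : Type} (op : Q -> Q -> Q) (H : is_quandle op) :
  forall c b z, op c b = z -> rdiv op z b = c.
Proof.
  intros c b z Hc. destruct H as [_ [Hu _]].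
  unfold rdiv.
  destruct (Hu z b) as [c0 [Hc0 Hun]].
  assert (E := epsilon_spec (inhabits z) (fun c => op c b = z) (ex_intro _ c Hc)).
  cbv beta in E.
  transitivity c0.
  - symmetry; apply Hun; exact E.
  - apply Hun; exact Hc.
Qed.

Lemma rdiv_spec {Q : Type} (op : Q -> Q -> Q) (H : is_quandle op) :
  forall z b, op (rdiv op z b) b = z.
Proof.
  intros z b. destruct H as [_ [Hu _]].
  destruct (Hu z b) as [c0 [Hc0 _]].
  unfold rdiv.
  exact (epsilon_spec (inhabits z) (fun c => op c b = z) (ex_intro _ c0 Hc0)).
Qed.

Theorem corollary4p15 (Q L : Type) (ops : L -> Q -> Q -> Q)
  (Hq : forall alpha, is_quandle (ops alpha))
  (Hdist : forall alpha beta (a b c : Q),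
      ops beta (ops alpha a b) c = ops alpha (ops beta a c) (ops beta b c)) :
  forall w v : list (L * bool),
    star_word ops (w ++ v) = star_word ops (v ++ w).
Proof.
  assert (Hff : forall al be b x, ops be (ops al x b) b = ops al (ops be x b) b).
  { intros al be b x. rewrite Hdist. destruct (Hq be) as [Hi _]. now rewrite Hi. }
  assert (Hfi : forall al be b x,
             ops be (rdiv (ops al) x b) b = rdiv (ops al) (ops be x b) b).
  { intros al be b x. symmetry. apply rdiv_uniq; [apply Hq|].
    rewrite <- Hff. now rewrite rdiv_spec by apply Hq. }
  assert (Hii : forall al be b x,
             rdiv (ops be) (rdiv (ops al) x b) b = rdiv (ops al) (rdiv (ops be) x b) b).
  { intros al be b x. symmetry. apply rdiv_uniq; [apply Hq|].
    rewrite Hfi. now rewrite rdiv_spec by apply Hq. }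
  assert (Hc : forall s t b x,
             letter_op ops s (letter_op ops t x b) b = letter_op ops t (letter_op ops s x b) b).
  { intros [al []] [be []] b x; unfold letter_op; simpl.
    - apply Hff.
    - apply Hfi.
    - symmetry; apply Hfi.
    - apply Hii. }
  set (f := fun b x s => letter_op ops s x b).
  assert (Hfold : forall b w t x,
             fold_left (f b) w (letter_op ops t x b) = letter_op ops t (fold_left (f b) w x) b).
  { intros b w; induction w as [|s w IH]; intros t x; simpl; [reflexivity|].
    unfold f at 2 4. rewrite Hc. apply IH. }
  intros w v. apply functional_extensionality; intro a.
  apply functional_extensionality; intro b.
  unfold star_word. change (fun x s => letter_op ops s x b) with (f b).
  rewrite !fold_left_app.
  revert a. induction w as [|s w IH]; intro a; simpl; [reflexivity|].
  rewrite IH. unfold f at 3 4. rewrite Hfold. reflexivity.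
Qed.
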